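(* Let $X_0$ and $(X_t(a_{1:t}):t\in\{1,\dots,T\},a_{1:t}\in\mathcal{A}_{1:t})$ be potential outcomes with $X_t(a_{1:t})\in\mathcal{X}_t$, let $A_{1:T}$ be random actions with $A_t\in\mathcal{A}_t$, and let $(Y(a_{1:t}):a_{1:t}\in\mathcal{A}_{1:t})$ be real-valued potential outcomes defined jointly with these. Suppose for some $t\in\{1,\dots,T\}$, $a_{1:t}\in\mathcal{A}_{1:t}$, measurable $B_{0:t}=B_0\times\cdots\times B_t\subseteq\mathcal{X}_{0:t}$ and $\underline y,\overline y\in\mathbb{R}$ we have $\mathbb{P}(X_{0:t}(a_{1:t})\in B_{0:t})>0$ and $\mathbb{P}(\underline y\le Y(a_{1:t})\le\overline y\mid X_{0:t}(a_{1:t})\in B_{0:t})=1$. Let $N=\max\{0\le s\le t: A_{1:s}=a_{1:s}\}$ and $$\underline Y=\mathbb{1}(A_{1:t}=a_{1:t})Y(A_{1:t})+\mathbb{1}(A_{1:t}\ne a_{1:t})\underline y,\qquad\overline Y=\mathbb{1}(A_{1:t}=a_{1:t})Y(A_{1:t})+\mathbb{1}(A_{1:t}\ne a_{1:t})\overline y.$$ Then $$\mathbb{E}[\underline Y\mid X_{0:N}(A_{1:N})\in B_{0:N}]\le\mathbb{E}[Y(a_{1:t})\mid X_{0:t}(a_{1:t})\in B_{0:t}]\le\mathbb{E}[\overline Y\mid X_{0:N}(A_{1:N})\in B_{0:N}].$$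
   Context: Horizon $T\ge1$, $\mathcal{X}_t=\mathbb{R}^{d_t}$, finite action spaces $\mathcal{A}_t$; $z_{s:t}=(z_s,\dots,z_t)$ (empty if $s>t$), $\mathcal{X}_{0:t}=\mathcal{X}_0\times\cdots\times\mathcal{X}_t$, $X_{0:t}(a_{1:t})=(X_0,X_1(a_1),\dots,X_t(a_{1:t}))$. Quantities evaluated at the random actions, e.g. $X_{0:N}(A_{1:N})$ and $Y(A_{1:t})$, denote the potential outcome indexed by the realized actions; $X_{0:N}(A_{1:N})\in B_{0:N}$ means $X_s(A_{1:s})\in B_s$ for all $0\le s\le N$. No further causal assumptions (e.g. no unconfoundedness) are made. *)

(* Defs.v *)
From HB Require Import structures.
From mathcomp Require Import all_boot all_order all_algebra.
From mathcomp Require Import all_classical all_reals all_analysis.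
Set Implicit Arguments.
Unset Strict Implicit.
Unset Printing Implicit Defensive.
Import Order.TTheory GRing.Theory Num.Theory.
Import numFieldNormedType.Exports.
Local Open Scope classical_set_scope.
Local Open Scope ring_scope.

(* Borel sets of R^n = 'rV[R]_n : sigma-algebra generated by the open sets
   of the (product/max-norm) topology of row vectors. *)
Definition borel_rV (R : realType) (n : nat) : set (set 'rV[R]_n) :=
  <<s @open 'rV[R]_n >>.

Definition measurable_rV (d : measure_display) (Omega : measurableType d)
  (R : realType) (n : nat) (f : Omega -> 'rV[R]_n) : Prop :=
  forall B, borel_rV B -> measurable (f @^-1` B).

(* Action histories: a : forall s, A s ; only coordinates 1..t are used
   for a_{1:t}. *)
Definition hist (A : nat -> finType) := forall s : nat, A s.

Definition prefix_eq (A : nat -> finType) (t : nat) (a b : hist A) : Prop :=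
  forall s : nat, (1 <= s <= t)%N -> a s = b s.

Definition act_hist (A : nat -> finType) (Omega : Type)
  (Act : forall s : nat, Omega -> A s) (w : Omega) : hist A :=
  fun s => Act s w.

Definition agree (A : nat -> finType) (Omega : Type)
  (Act : forall s : nat, Omega -> A s) (a : hist A) (s : nat) (w : Omega)
  : bool :=
  [forall r : 'I_s, Act r.+1 w == a r.+1].

Definition Nidx (A : nat -> finType) (Omega : Type)
  (Act : forall s : nat, Omega -> A s) (a : hist A) (t : nat) (w : Omega)
  : nat :=
  (\max_(s < t.+1 | agree Act a s w) (s : nat))%N.

Definition ev_fixed (R : realType) (A : nat -> finType) (Omega : Type)
  (dim : nat -> nat) (X : forall s : nat, hist A -> Omega -> 'rV[R]_(dim s))
  (B : forall s : nat, set 'rV[R]_(dim s)) (t : nat) (a : hist A) : set Omega :=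
  [set w | forall s : nat, (s <= t)%N -> B s (X s a w)].

Definition ev_random (R : realType) (A : nat -> finType) (Omega : Type)
  (dim : nat -> nat) (X : forall s : nat, hist A -> Omega -> 'rV[R]_(dim s))
  (Act : forall s : nat, Omega -> A s)
  (B : forall s : nat, set 'rV[R]_(dim s)) (t : nat) (a : hist A) : set Omega :=
  [set w | forall s : nat, (s <= Nidx Act a t w)%N ->
                           B s (X s (act_hist Act w) w)].

Definition condP (d : measure_display) (Omega : measurableType d)
  (R : realType) (P : probability Omega R) (F E : set Omega) : R :=
  fine (P (F `&` E)) / fine (P E).

Definition condE (d : measure_display) (Omega : measurableType d)
  (R : realType) (P : probability Omega R) (E : set Omega) (f : Omega -> R) : R :=
  Rintegral P E f / fine (P E).

Definition Ybound (R : realType) (A : nat -> finType) (Omega : Type)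
  (Act : forall s : nat, Omega -> A s) (Y : hist A -> Omega -> R)
  (a : hist A) (t : nat) (y : R) (w : Omega) : R :=
  if agree Act a t w then Y (act_hist Act w) w else y.

(* Main.v *)
Require Import Defs.
From HB Require Import structures.
From mathcomp Require Import all_boot all_order all_algebra.
From mathcomp Require Import all_classical all_reals all_analysis.
From mathcomp Require Import measurable_realfun.
From mathcomp Require Import lra.
Import Order.TTheory GRing.Theory Num.Theory.
Local Open Scope classical_set_scope.
Local Open Scope ring_scope.

Section H.
Context d (Om : measurableType d) (R : realType) (P : probability Om R).

Lemma null_sub (D N : set Om) : measurable D -> measurable N -> P N = 0%E ->
  P (D `\` N) = P D.
Proof.
move=> mD mN N0.
have h0 : P (D `&` N) = 0%E.
  apply/eqP; rewrite eq_le measure_ge0 andbT -N0.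
  by apply: le_measure => //; rewrite inE //; exact: measurableI.
rewrite [RHS](measureDI P mD mN) -[LHS]adde0; congr (_ + _)%E; exact/esym/h0.
Qed.

Lemma L_lo (D N : set Om) (f : Om -> R) (c : R) :
  measurable D -> measurable N -> P N = 0%E ->
  P.-integrable D (EFin \o f) ->
  (forall x, D x -> ~ N x -> c <= f x) ->
  c * fine (P D) <= Rintegral P D f.
Proof.
move=> mD mN N0 fi hc.
have mDN : measurable (D `\` N) by exact: measurableD.
have -> : Rintegral P D f = Rintegral P (D `\` N) f.
  by rewrite /Rintegral (negligible_integral mN mD fi N0).
rewrite -(@null_sub D N mD mN N0) -Rintegral_cst //.
apply: le_Rintegral => //.
- exact: finite_measure_integrable_cst.
- by apply: (integrableS mD mDN _ fi) => x [].
- by move=> x [Dx Nx]; exact: hc.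
Qed.

Lemma L_hi (D N : set Om) (f : Om -> R) (c : R) :
  measurable D -> measurable N -> P N = 0%E ->
  P.-integrable D (EFin \o f) ->
  (forall x, D x -> ~ N x -> f x <= c) ->
  Rintegral P D f <= c * fine (P D).
Proof.
move=> mD mN N0 fi hc.
have mDN : measurable (D `\` N) by exact: measurableD.
have -> : Rintegral P D f = Rintegral P (D `\` N) f.
  by rewrite /Rintegral (negligible_integral mN mD fi N0).
rewrite -(@null_sub D N mD mN N0) -Rintegral_cst //.
apply: le_Rintegral => //.
- by apply: (integrableS mD mDN _ fi) => x [].
- exact: finite_measure_integrable_cst.
- by move=> x [Dx Nx]; exact: hc.
Qed.

Lemma decomp (E F H : set Om) (f g : Om -> R) (c : R) :
  measurable E -> measurable F -> measurable H -> H `<=` E -> E `<=` F ->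
  P.-integrable E (EFin \o f) -> measurable_fun F g ->
  (forall x, H x -> g x = f x) -> (forall x, F x -> ~ H x -> g x = c) ->
  Rintegral P F g = Rintegral P H f + c * fine (P (F `\` H)) /\
  Rintegral P E f = Rintegral P H f + Rintegral P (E `\` H) f /\
  fine (P F) = fine (P H) + fine (P (F `\` H)) /\
  fine (P E) = fine (P H) + fine (P (E `\` H)).
Proof.
move=> mE mF mH HE EF fi mg hH hF.
have HF : H `<=` F by move=> x /HE /EF.
have dis : forall A : set Om, [disjoint H & A `\` H].
  by move=> A; apply/eqP; apply/seteqP; split => x // [hx [_ nhx]].
have mFH : measurable (F `\` H) by exact: measurableD.
have mEH : measurable (E `\` H) by exact: measurableD.
have fiH : P.-integrable H (EFin \o f) by exact: (integrableS mE mH HE fi).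
have fin : forall A, measurable A -> P A \is a fin_num.
  by move=> A mA; exact: fin_num_measure.
have mU : forall A, measurable A -> H `<=` A -> P A = (P H + P (A `\` H))%E.
  move=> A mA HA; rewrite -{1}(setDUK HA) measureU //; first exact: measurableD.
  by apply/seteqP; split => x // [hx [_ nhx]].
split.
  rewrite /Rintegral -{1}(setDUK HF) integral_setU //; last first.
    by rewrite (setDUK HF); apply/measurable_EFinP.
  rewrite (eq_integral (EFin \o f)); last by move=> x /set_mem hx /=; rewrite hH.
  rewrite (eq_integral (cst c%:E) (fun x => (g x)%:E) ); last first.
    by move=> x /set_mem [Fx nHx] /=; rewrite hF.
  rewrite integral_cst // fineD //; last by rewrite fin_numM // fin.
    by rewrite fineM // fin.
  exact: integrable_fin_num.
split.
  rewrite -{1}(setDUK HE) Rintegral_setU //; first by rewrite (setDUK HE).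
split.
  by rewrite (mU F mF HF) fineD // fin.
by rewrite (mU E mE HE) fineD // fin.
Qed.

End H.

Lemma meas_forall d (Om : measurableType d) (p : nat -> Prop) (Q : nat -> set Om) :
  (forall s, p s -> measurable (Q s)) ->
  measurable [set w | forall s, p s -> Q s w].
Proof.
move=> hQ.
have -> : [set w | forall s, p s -> Q s w] = \bigcap_(s in p) Q s.
  by apply/seteqP; split => w /= h s hs; apply: h.
exact: bigcap_measurableType.
Qed.

Section Agree.
Context (A : nat -> finType) (Om : Type) (Act : forall s : nat, Om -> A s)
  (a : hist A).

Lemma agreeP s w : agree Act a s w <-> forall r, (r < s)%N -> Act r.+1 w = a r.+1.
Proof.
split.
  by move/forallP => h r rs; exact/eqP/(h (Ordinal rs)).
by move=> h; apply/forallP => r; apply/eqP/h/ltn_ord.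
Qed.

Lemma agree_mono {s s' w} : agree Act a s w -> (s' <= s)%N -> agree Act a s' w.
Proof.
move=> /agreeP h le; apply/agreeP => r rs; apply: h.
exact: leq_trans rs le.
Qed.

Lemma agree_prefix {s w} : agree Act a s w -> prefix_eq s (act_hist Act w) a.
Proof.
move=> /agreeP h r /andP[r1 rs]; rewrite /act_hist.
by case: r r1 rs => // r _ rs; exact: h.
Qed.

Lemma agree0 w : agree Act a 0 w.
Proof. by apply/agreeP. Qed.

Lemma Nidx_le t w : (Nidx Act a t w <= t)%N.
Proof. by apply/bigmax_leqP => i _; rewrite -ltnS; exact: ltn_ord. Qed.

Lemma NidxE t w s : (s <= t)%N -> (s <= Nidx Act a t w)%N = agree Act a s w.
Proof.
move=> st; apply/idP/idP.
  move=> sN; case: (boolP (agree Act a s w)) => // nag; exfalso.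
  have s0 : (0 < s)%N.
    by case: s st sN nag => // _ _; rewrite agree0.
  have : (Nidx Act a t w <= s.-1)%N.
    apply/bigmax_leqP => i agi.
    rewrite -ltnS prednK // ltnNge; apply/negP => si.
    by rewrite (agree_mono agi si) in nag.
  move=> h; have := leq_trans sN h.
  by rewrite -ltnS prednK // ltnn.
move=> ag.
exact: (@leq_bigmax_cond _ (fun i : 'I_t.+1 => agree Act a i w)
  (fun i => nat_of_ord i) (Ordinal (st : (s < t.+1)%N))).
Qed.

End Agree.
Arguments agreeP {A Om Act a s w}.
Arguments agree_prefix {A Om Act a s w}.
Arguments agree_mono {A Om Act a s s' w}.
Arguments NidxE {A Om Act a t w s}.
Arguments Nidx_le {A Om Act a t w}.

Lemma alg_lo (R : realType) (h u v I J c : R) : 0 <= h -> 0 <= v -> v <= u ->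
  0 < h + v -> c * h <= I -> c * v <= J ->
  (I + c * u) / (h + u) <= (I + J) / (h + v).
Proof.
move=> h0 v0 vu hv cI cJ.
have hu : 0 < h + u by lra.
rewrite ler_pdivrMr // mulrAC ler_pdivlMr //.
have p1 : 0 <= (u - v) * (I - c * h) by apply: mulr_ge0; lra.
have p2 : 0 <= (J - c * v) * (h + u) by apply: mulr_ge0; lra.
nra.
Qed.

Lemma alg_hi (R : realType) (h u v I J c : R) : 0 <= h -> 0 <= v -> v <= u ->
  0 < h + v -> I <= c * h -> J <= c * v ->
  (I + J) / (h + v) <= (I + c * u) / (h + u).
Proof.
move=> h0 v0 vu hv cI cJ.
have hu : 0 < h + u by lra.
rewrite ler_pdivrMr // mulrAC ler_pdivlMr //.
have p1 : 0 <= (u - v) * (c * h - I) by apply: mulr_ge0; lra.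
have p2 : 0 <= (c * v - J) * (h + u) by apply: mulr_ge0; lra.
nra.
Qed.

Lemma norm_bound (R : realType) (lo hi y : R) : lo <= y <= hi ->
  `|y| <= `|lo| + `|hi|.
Proof.
move=> /andP[h1 h2]; rewrite ler_norml.
have a1 := ler_norm hi; have a2 := ler_norm (- lo); rewrite normrN in a2.
have a3 := normr_ge0 lo; have a4 := normr_ge0 hi.
apply/andP; split; lra.
Qed.

Theorem theorem4p4
  (R : realType) (d : measure_display) (Omega : measurableType d)
  (P : probability Omega R)
  (T : nat) (hT : (1 <= T)%N)
  (dim : nat -> nat) (A : nat -> finType)
  (X : forall s : nat, hist A -> Omega -> 'rV[R]_(dim s))
  (hXcons : forall (s : nat) (a b : hist A), prefix_eq s a b -> X s a = X s b)
  (hXmeas : forall (s : nat) (a : hist A), (s <= T)%N -> measurable_rV (X s a))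
  (Act : forall s : nat, Omega -> A s)
  (hAmeas : forall (s : nat) (v : A s), (1 <= s <= T)%N ->
     measurable [set w | Act s w = v])
  (t : nat) (ht : (1 <= t <= T)%N)
  (Y : hist A -> Omega -> R)
  (hYcons : forall a b : hist A, prefix_eq t a b -> Y a = Y b)
  (hYmeas : forall a : hist A, measurable_fun setT (Y a))
  (a : hist A)
  (B : forall s : nat, set 'rV[R]_(dim s))
  (hB : forall s : nat, (s <= t)%N -> borel_rV (B s))
  (ylo yhi : R)
  (hpos : (0 < P (ev_fixed X B t a))%E)
  (hbnd : condP P [set w | ylo <= Y a w <= yhi] (ev_fixed X B t a) = 1) :
  condE P (ev_random X Act B t a) (Ybound Act Y a t ylo)
    <= condE P (ev_fixed X B t a) (Y a)
  /\ condE P (ev_fixed X B t a) (Y a)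
    <= condE P (ev_random X Act B t a) (Ybound Act Y a t yhi).
Proof.
move: (ht) => /andP[t1 tT].
set E := ev_fixed X B t a.
set F := ev_random X Act B t a.
set G := [set w | agree Act a t w].
set H := E `&` G.
set S := [set w | ylo <= Y a w <= yhi].
set N := E `\` S.
have Fch : forall w, F w <->
    (forall s, (s <= t)%N -> agree Act a s w -> B s (X s a w)).
  move=> w; split.
    move=> h s st ag; have := h s; rewrite NidxE // => /(_ ag).
    by rewrite (hXcons _ _ _ (agree_prefix ag)).
  move=> h s sN.
  have st : (s <= t)%N := leq_trans sN Nidx_le.
  have ag : agree Act a s w by rewrite -(NidxE (w:=w) st).
  by rewrite (hXcons _ _ _ (agree_prefix ag)); exact: h.
have mAg : forall s, (s <= t)%N -> measurable [set w | agree Act a s w].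
  move=> s st.
  have -> : [set w | agree Act a s w] =
      [set w | forall r, (r < s)%N -> [set w | Act r.+1 w = a r.+1] w].
    by apply/seteqP; split => w /agreeP.
  apply: meas_forall => r rs; apply: hAmeas.
  apply/andP; split => //; apply: leq_trans tT; exact: leq_trans rs st.
have mXB : forall s, (s <= t)%N -> measurable [set w | B s (X s a w)].
  move=> s st; apply: (hXmeas s a (leq_trans st tT)); exact: hB.
have mE : measurable E by apply: meas_forall.
have mF : measurable F.
  have -> : F = [set w | forall s, (s <= t)%N ->
      (~` [set w | agree Act a s w] `|` [set w | B s (X s a w)]) w].
    apply/seteqP; split => w.
      move=> /Fch h s st /=; case: (boolP (agree Act a s w)) => ag.
        by right; exact: h.
      by left => /=; apply/negP.
    move=> h; apply/Fch => s st ag; case: (h s st) => //=.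
  apply: meas_forall => s st; apply: measurableU; last exact: mXB.
  exact/measurableC/mAg.
have mG : measurable G := mAg t (leqnn t).
have mH : measurable H := measurableI _ _ mE mG.
have mS : measurable S.
  have := hYmeas a measurableT _ (measurable_itv `[ylo, yhi]).
  rewrite setTI.
  suff -> : S = Y a @^-1` [set` `[ylo, yhi]] by [].
  by apply/seteqP; split => w /=; rewrite in_itv.
have mN : measurable N := measurableD mE mS.
have EF : E `<=` F.
  by move=> w Ew; apply/Fch => s st _; exact: Ew.
have HE : H `<=` E by move=> w [].
have finP : forall D, measurable D -> P D \is a fin_num.
  by move=> D mD; exact: fin_num_measure.
have pE : 0 < fine (P E).
  by rewrite -lte_fin fineK // finP.
have PN0 : P N = 0%E.
  move: hbnd; rewrite /condP => hb.
  have e : fine (P (S `&` E)) = fine (P E).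
    by rewrite -[RHS]mul1r -hb mulfVK // gt_eqF.
  have hf : fine (P E) = fine (P N) + fine (P (E `&` S)).
    have := congr1 fine (measureDI P mE mS).
    rewrite fineD; first by move=> ->.
      exact: (finP _ (measurableD mE mS)).
    exact: (finP _ (measurableI _ _ mE mS)).
  have e' : fine (P (E `&` S)) = fine (P E) by rewrite setIC.
  rewrite -(fineK (finP N mN)); congr EFin; lra.
have hNS : forall x, E x -> ~ N x -> ylo <= Y a x <= yhi.
  move=> x Ex nN; apply: contrapT => nS; apply: nN; split => //.
have mEN : measurable (E `\` N) := measurableD mE mN.
have fint : P.-integrable E (EFin \o Y a).
  have mfE : measurable_fun E (EFin \o Y a).
    by apply/measurable_EFinP; exact: measurable_funTS.
  apply/(negligible_integrable mN mE mfE PN0).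
  apply: (le_integrable mEN _ _ (finite_measure_integrable_cst P (`|ylo| + `|yhi|) mEN)).
    exact: measurable_funS mfE.
  move=> x [Ex nN] /=; rewrite lee_fin [X in _ <= X]ger0_norm; last by rewrite addr_ge0 // normr_ge0.
  exact/norm_bound/hNS.
pose gf c := fun w => if agree Act a t w then Y a w else c.
have Ybeq : forall c, Ybound Act Y a t c = gf c.
  move=> c; apply/funext => w; rewrite /Ybound /gf; case: ifP => // ag.
  by rewrite (hYcons _ _ (agree_prefix ag)).
have mg : forall c, measurable_fun F (gf c).
  move=> c; apply: measurable_funTS; apply: measurable_fun_ifT => //.
  by apply: (measurable_fun_bool true); rewrite setTI.
have dec : forall c,
  Rintegral P F (gf c) = Rintegral P H (Y a) + c * fine (P (F `\` H)) /\
  Rintegral P E (Y a) = Rintegral P H (Y a) + Rintegral P (E `\` H) (Y a) /\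
  fine (P F) = fine (P H) + fine (P (F `\` H)) /\
  fine (P E) = fine (P H) + fine (P (E `\` H)).
  move=> c; apply: decomp => //.
  - by move=> x [_ ag]; rewrite /gf ag.
  - move=> x Fx nH; rewrite /gf; case: ifPn => // ag; exfalso; apply: nH.
    split => //; move=> s st; apply: (proj1 (Fch x) Fx s st).
    exact: agree_mono ag st.
have mFH : measurable (F `\` H) := measurableD mF mH.
have mEH : measurable (E `\` H) := measurableD mE mH.
have h0 : 0 <= fine (P H) by apply: fine_ge0.
have v0 : 0 <= fine (P (E `\` H)) by apply: fine_ge0.
have vu : fine (P (E `\` H)) <= fine (P (F `\` H)).
  apply: fine_le; rewrite ?finP //; apply: le_measure; rewrite ?inE //.
  by move=> x [Ex nH]; split => //; exact: EF.
have fH : P.-integrable H (EFin \o Y a) := integrableS mE mH HE fint.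
have fEH : P.-integrable (E `\` H) (EFin \o Y a).
  by apply: (integrableS mE mEH _ fint) => x [].
rewrite /condE !Ybeq.
have [d1 [d2 [d3 d4]]] := dec ylo.
have [e1 [_ [_ _]]] := dec yhi.
split.
  rewrite d1 d2 d3 d4; apply: alg_lo => //; first by rewrite -d4.
  - apply: (@L_lo _ _ _ P _ _ _ _ mH mN PN0 fH) => x [Ex _] nN; by case/andP: (hNS x Ex nN).
  - apply: (@L_lo _ _ _ P _ _ _ _ mEH mN PN0 fEH) => x [Ex _] nN; by case/andP: (hNS x Ex nN).
rewrite e1 d2 d3 d4; apply: alg_hi => //; first by rewrite -d4.
- apply: (@L_hi _ _ _ P _ _ _ _ mH mN PN0 fH) => x [Ex _] nN; by case/andP: (hNS x Ex nN).
- apply: (@L_hi _ _ _ P _ _ _ _ mEH mN PN0 fEH) => x [Ex _] nN; by case/andP: (hNS x Ex nN).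
Qed.
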